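(* Let $L$ be an h-local C-lattice domain in which every element is a join of principal elements. If $a,b\in L\setminus\{0\}$ and $m$ is a maximal element of $L$, then $(a:b)_m=(a_m:b_m)$.
   Context: A multiplicative lattice is a complete lattice $(L,\le)$ with bottom $0$ and top $1$ which is also a commutative monoid with identity $1$ such that $a(\bigvee_\alpha b_\alpha)=\bigvee_\alpha(ab_\alpha)$ for all $a,b_\alpha\in L$. For $x,y\in L$, $(y:x)=\bigvee\{c\in L: cx\le y\}$. An element $c$ is compact if $c\le\bigvee S$ implies $c\le\bigvee T$ for some finite $T\subseteq S$. A C-lattice is a multiplicative lattice in which $1$ is compact, the product of two compact elements is compact, and every element is a join of compact elements; $L^*$ denotes its compact elements. A proper element $p\ne1$ is prime if $xy\le p$ implies $x\le p$ or $y\le p$; maximal elements are maximal in $L\setminus\{1\}$; $L$ is a domain if $0$ is prime. An element $x$ is principal if $y\wedge zx=((y:x)\wedge z)x$ and $y\vee(z:x)=((yx\vee z):x)$ for all $y,z\in L$. For $p$ prime and $x\in L$, $x_p=\bigvee\{c\in L^*: cs\le x \text{ for some } s\in L^*,\ s\not\le p\}$. $L$ has finite character if every nonzero element is below only finitely many maximal elements; $L$ is h-local if it has finite character and every nonzero prime element is below a unique maximal element. *)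

(* Defs.v *)
From Stdlib Require Import List.
Set Implicit Arguments.

Record MultLattice : Type := {
  carrier :> Type;
  le : carrier -> carrier -> Prop;
  sup : (carrier -> Prop) -> carrier;
  mul : carrier -> carrier -> carrier;
  zero : carrier;
  one : carrier;
  le_refl : forall x, le x x;
  le_trans : forall x y z, le x y -> le y z -> le x z;
  le_antisym : forall x y, le x y -> le y x -> x = y;
  sup_ub : forall (S : carrier -> Prop) x, S x -> le x (sup S);
  sup_least : forall (S : carrier -> Prop) y, (forall x, S x -> le x y) -> le (sup S) y;
  zero_le : forall x, le zero x;
  le_one : forall x, le x one;
  mulC : forall x y, mul x y = mul y x;
  mulA : forall x y z, mul x (mul y z) = mul (mul x y) z;
  mul1 : forall x, mul one x = x;
  mul_sup : forall a (S : carrier -> Prop),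
      mul a (sup S) = sup (fun t => exists b, S b /\ t = mul a b)
}.

Arguments le {m} _ _.
Arguments sup {m} _.
Arguments mul {m} _ _.

Section Defs.
Variable L : MultLattice.

Definition join2 (x y : L) : L := sup (fun t => t = x \/ t = y).
Definition meet2 (x y : L) : L := sup (fun t => le t x /\ le t y).

Definition colon (y x : L) : L := sup (fun c => le (mul c x) y).

Definition compact (c : L) : Prop :=
  forall S : L -> Prop, le c (sup S) ->
    exists T : list L, (forall t, In t T -> S t) /\ le c (sup (fun t => In t T)).

Definition C_lattice : Prop :=
  compact (one L) /\
  (forall c d, compact c -> compact d -> compact (mul c d)) /\
  (forall x, x = sup (fun c => compact c /\ le c x)).

Definition prime (p : L) : Prop :=
  p <> one L /\ forall x y, le (mul x y) p -> le x p \/ le y p.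

Definition maximal (m : L) : Prop :=
  m <> one L /\ forall x, le m x -> x <> one L -> x = m.

Definition domain : Prop := prime (zero L).

Definition principal (x : L) : Prop :=
  forall y z : L,
    meet2 y (mul z x) = mul (meet2 (colon y x) z) x /\
    join2 y (colon z x) = colon (join2 (mul y x) z) x.

(** x_p = \/ { c in L* | c s <= x for some s in L*, s not <= p } *)
Definition loc (x p : L) : L :=
  sup (fun c => compact c /\
       exists s, compact s /\ ~ le s p /\ le (mul c s) x).

Definition finite_character : Prop :=
  forall x : L, x <> zero L ->
    exists l : list L, forall m, maximal m -> le x m -> In m l.

Definition h_local : Prop :=
  finite_character /\
  forall p : L, prime p -> p <> zero L ->
    exists m, (maximal m /\ le p m) /\
      forall m', maximal m' /\ le p m' -> m' = m.

Definition principally_generated : Prop :=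
  forall x : L, x = sup (fun c => principal c /\ le c x).

End Defs.

Arguments join2 {L} _ _.
Arguments meet2 {L} _ _.
Arguments colon {L} _ _.
Arguments compact {L} _.
Arguments prime {L} _.
Arguments maximal {L} _.
Arguments principal {L} _.
Arguments loc {L} _ _.

(* Main.v *)
Require Import Defs.
From Stdlib Require Import List Classical ProofIrrelevance.
From mathcomp Require classical_sets boolp.

Lemma asb (P : Prop) : is_true (boolp.asbool P) <-> P.
Proof. split; [exact (ssrbool.elimT (boolp.asboolP P)) | exact (ssrbool.introT (boolp.asboolP P))]. Qed.

Lemma asb1 (P : Prop) : is_true (boolp.asbool P) -> P.
Proof. apply asb. Qed.
Lemma asb2 (P : Prop) : P -> is_true (boolp.asbool P).
Proof. apply asb. Qed.

Lemma mul_mono (L : MultLattice) (z x y : L) : le x y -> le (mul z x) (mul z y).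
Proof.
  intros H.
  assert (E : y = sup (fun t => t = x \/ t = y)).
  { apply le_antisym. apply sup_ub; auto.
    apply sup_least. intros t [-> | ->]; auto using le_refl. }
  rewrite E, mul_sup. apply sup_ub. exists x. split; auto.
Qed.

Lemma mul_mono2 (L : MultLattice) (x y x' y' : L) :
  le x x' -> le y y' -> le (mul x y) (mul x' y').
Proof.
  intros H1 H2. apply le_trans with (mul x y'). apply mul_mono; auto.
  rewrite (mulC _ x), (mulC _ x'). apply mul_mono; auto.
Qed.

Lemma mul_le_l (L : MultLattice) (z x : L) : le (mul z x) z.
Proof.
  apply le_trans with (mul z (one L)). apply mul_mono, le_one.
  rewrite mulC, mul1. apply le_refl.
Qed.

Lemma mul_le_r (L : MultLattice) (z x : L) : le (mul x z) z.
Proof. rewrite mulC. apply mul_le_l. Qed.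

Lemma colon_mul (L : MultLattice) (y x : L) : le (mul (colon y x) x) y.
Proof.
  unfold colon. rewrite mulC, mul_sup. apply sup_least.
  intros t [b [Hb ->]]. rewrite mulC. exact Hb.
Qed.

Lemma colon_intro (L : MultLattice) (c y x : L) : le (mul c x) y -> le c (colon y x).
Proof. intros H. unfold colon. apply sup_ub. exact H. Qed.

Lemma join2_mul (L : MultLattice) (p x y : L) :
  le (mul y p) p -> le (mul y x) p -> le (mul y (join2 p x)) p.
Proof.
  intros H1 H2. unfold join2. rewrite mul_sup. apply sup_least.
  intros t [b [[-> | ->] ->]]; auto.
Qed.

Lemma maximal_prime (L : MultLattice) (m : L) : maximal m -> prime m.
Proof.
  intros [Hm1 Hm]. split; auto.
  intros x y Hxy. destruct (classic (le x m)) as [Hx | Hx]; [left; auto | right].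
  assert (J : join2 m x = one L).
  { apply NNPP. intros Hne. apply Hx.
    assert (E := Hm (join2 m x) (sup_ub _ (fun t => t = m \/ t = x) m (or_introl eq_refl)) Hne).
    rewrite <- E. apply sup_ub. auto. }
  rewrite <- (mul1 L y), <- J, mulC. apply join2_mul.
  apply mul_le_r. rewrite mulC. exact Hxy.
Qed.

Arguments maximal_prime {L m}.

Lemma prime_mul_not (L : MultLattice) (m s t : L) :
  prime m -> ~ le s m -> ~ le t m -> ~ le (mul s t) m.
Proof. intros [_ P] H1 H2 H3. destruct (P _ _ H3); auto. Qed.

Lemma le_loc (L : MultLattice) (x m : L) : C_lattice L -> m <> one L -> le x (loc x m).
Proof.
  intros [H1 [H2 H3]] Hm. rewrite (H3 x) at 1. apply sup_least.
  intros e [He Hex]. apply sup_ub. split; auto.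
  exists (one L). split; auto. split.
  - intros H. apply Hm. apply le_antisym; auto using le_one.
  - rewrite mulC, mul1. exact Hex.
Qed.

Lemma prime_avoid (L : MultLattice) (S : L -> Prop) (a : L) :
  (forall t, S t -> compact t) -> S (one L) -> (forall s t, S s -> S t -> S (mul s t)) ->
  (forall t, S t -> ~ le t a) ->
  exists p, prime p /\ le a p /\ forall t, S t -> ~ le t p.
Proof.
  intros Hc H1 Hm Ha.
  set (P := fun x : L => le a x /\ forall t, S t -> ~ le t x).
  set (T := {x : L | P x}).
  set (R := fun u v : T => boolp.asbool (le (proj1_sig u) (proj1_sig v))).
  assert (base : P a) by (split; auto using le_refl).
  set (b0 := exist P a base : T).
  destruct (@classical_sets.Zorn T R) as [p Hp].
  - intros t. unfold R. apply asb2. apply le_refl.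
  - intros r s0 t H H'. unfold R in *. apply asb2. apply asb1 in H. apply asb1 in H'. eapply le_trans; eauto.
  - intros u v H H'. unfold R in *. destruct u as [s0 Ps], v as [t Pt]. apply asb1 in H. apply asb1 in H'. simpl in *.
    assert (s0 = t) by (apply le_antisym; auto). subst. f_equal. apply proof_irrelevance.
  - intros A HA. unfold R in *.
    set (u := sup (fun x => x = a \/ exists y, A y /\ x = proj1_sig y)).
    assert (Pu : P u).
    { split. apply sup_ub. auto.
      intros t St Htu. destruct (Hc t St _ Htu) as [l [Hl Htl]].
      assert (K : exists y0 : T, (y0 = b0 \/ A y0) /\ forall x, In x l -> le x (proj1_sig y0)).
      { clear Htl. induction l as [|x l IH].
        - exists b0. split; auto. intros x [].
        - destruct IH as [y0 [Hy0 Hb]]. intros z Hz. apply Hl. right; auto.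
          destruct (Hl x (or_introl eq_refl)) as [-> | [y [Ay ->]]].
          + exists y0. split; auto. intros z [<- | Hz]; auto.
            destruct y0 as [y0 Py0]. apply Py0.
          + destruct Hy0 as [-> | Ay0].
            * exists y. split; auto. intros z [<- | Hz]. apply le_refl.
              eapply le_trans. apply Hb; auto. destruct y as [y Py]. apply Py.
            * destruct (HA y y0 Ay Ay0) as [Hr | Hr]; apply asb1 in Hr.
              -- exists y0. split; auto. intros z [<- | Hz]; auto.
              -- exists y. split; auto. intros z [<- | Hz]. apply le_refl.
                 eapply le_trans; eauto. }
      destruct K as [[y0 Py0] [_ Hb]]. apply (proj2 Py0 t St).
      eapply le_trans. exact Htl. apply sup_least. exact Hb. }
    exists (exist P u Pu). intros s0 As. apply asb2. simpl. apply sup_ub. right. eauto.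
  - destruct p as [p [Pa Pt]].
    exists p. split; [|split; auto].
    assert (Key : forall x, ~ le x p -> exists t, S t /\ le t (join2 p x)).
    { intros x Hx. apply NNPP. intros Hn.
      assert (Pj : P (join2 p x)).
      { split. eapply le_trans. exact Pa. apply sup_ub. auto.
        intros t St Ht. apply Hn. eauto. }
      assert (E := Hp (exist P _ Pj)). simpl in E.
      assert (E' : exist P (join2 p x) Pj = exist P p (conj Pa Pt)).
      { apply E. apply asb2. simpl. apply sup_ub. auto. }
      apply Hx. injection E' as E''. rewrite <- E''. apply sup_ub. auto. }
    split.
    + intros E. apply (Pt _ H1). rewrite E. apply le_refl.
    + intros x y Hxy. apply NNPP. intros Hn.
      apply not_or_and in Hn. destruct Hn as [Hx Hy].
      destruct (Key x Hx) as [t1 [S1 T1]]. destruct (Key y Hy) as [t2 [S2 T2]].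
      apply (Pt _ (Hm _ _ S1 S2)).
      eapply le_trans. apply mul_mono2; eauto.
      rewrite mulC. apply join2_mul.
      * apply mul_le_r.
      * rewrite mulC. apply join2_mul. apply mul_le_r. exact Hxy.
Qed.

Lemma mul4 (L : MultLattice) (a b c d : L) :
  mul (mul a b) (mul c d) = mul (mul a c) (mul b d).
Proof. rewrite <- mulA, (mulA _ b c d), (mulC _ b c), <- (mulA _ c b d), mulA. reflexivity. Qed.

Lemma one_not_le (L : MultLattice) (m : L) : m <> one L -> ~ le (one L) m.
Proof. intros H H'. apply H. apply le_antisym; auto using le_one. Qed.

Lemma compact_loc (L : MultLattice) (a n d : L) :
  C_lattice L -> prime n -> compact d -> le d (loc a n) ->
  exists t, compact t /\ ~ le t n /\ le (mul d t) a.
Proof.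
  intros [C1 [C2 C3]] Hn Hd Hdl.
  destruct (Hd _ Hdl) as [l [Hl Hdl']].
  assert (K : exists t, compact t /\ ~ le t n /\ forall e, In e l -> le (mul e t) a).
  { clear Hdl'. induction l as [|e l IH].
    - exists (one L). split; auto. split. apply one_not_le, Hn. intros e [].
    - destruct IH as [t [Ht [Htn Hte]]]. intros z Hz. apply Hl. right; auto.
      destruct (Hl e (or_introl eq_refl)) as [He [u [Hu [Hun Heu]]]].
      exists (mul t u). split; auto. split. apply prime_mul_not; auto.
      intros z [<- | Hz].
      + eapply le_trans; [|exact Heu]. apply mul_mono, mul_le_r.
      + eapply le_trans; [|apply (Hte z Hz)]. apply mul_mono, mul_le_l. }
  destruct K as [t [Ht [Htn Hte]]]. exists t. split; auto. split; auto.
  eapply le_trans. apply mul_mono2. exact Hdl'. apply le_refl.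
  rewrite mulC, mul_sup. apply sup_least. intros z [e [He ->]]. rewrite mulC. auto.
Qed.

Arguments compact_loc {L a n d}.

Lemma loc_other (L : MultLattice) (a m n : L) :
  C_lattice L -> h_local L -> a <> zero L -> maximal m -> maximal n -> n <> m ->
  exists s, compact s /\ ~ le s m /\ le s (loc a n).
Proof.
  intros HC Hh Ha Hm Hn Hnm. apply NNPP. intros Hno.
  pose proof HC as [C1 [C2 C3]].
  assert (Pm := maximal_prime Hm). assert (Pn := maximal_prime Hn).
  destruct (@prime_avoid L (fun t => exists s u, compact s /\ compact u /\ ~ le s m /\ ~ le u n /\ t = mul s u) a)
    as [p [Pp [Pa Pt]]].
  - intros t [s [u [Hs [Hu [_ [_ ->]]]]]]. auto.
  - exists (one L), (one L). rewrite mul1. repeat split; auto; apply one_not_le.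
    apply Hm. apply Hn.
  - intros t t' [s [u [Hs [Hu [Hsm [Hun ->]]]]]] [s' [u' [Hs' [Hu' [Hsm' [Hun' ->]]]]]].
    exists (mul s s'), (mul u u'). repeat split; auto using prime_mul_not. apply mul4.
  - intros t [s [u [Hs [Hu [Hsm [Hun ->]]]]]] Hsu. apply Hno. exists s. repeat split; auto.
    unfold loc. apply sup_ub. split; auto. exists u. auto.
  - assert (Hpm : le p m).
    { rewrite (C3 p). apply sup_least. intros e [He Hep]. apply NNPP. intros Hem.
      apply (Pt e); auto. exists e, (one L). rewrite mulC, mul1.
      repeat split; auto. apply one_not_le, Hn. }
    assert (Hpn : le p n).
    { rewrite (C3 p). apply sup_least. intros e [He Hep]. apply NNPP. intros Hen.
      apply (Pt e); auto. exists (one L), e. rewrite mul1.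
      repeat split; auto. apply one_not_le, Hm. }
    assert (Hp0 : p <> zero L).
    { intros E. apply Ha. apply le_antisym. rewrite <- E. auto. apply zero_le. }
    destruct (proj2 Hh p Pp Hp0) as [m0 [_ U]].
    apply Hnm. rewrite (U m), (U n); auto.
Qed.

Arguments loc_other {L a m n}.

Lemma loc_top (L : MultLattice) (a n : L) :
  C_lattice L -> ~ le a n -> le (one L) (loc a n).
Proof.
  intros [C1 [C2 C3]] Han.
  assert (E : exists e, compact e /\ le e a /\ ~ le e n).
  { apply NNPP. intros H. apply Han. rewrite (C3 a). apply sup_least.
    intros e [He Hea]. apply NNPP. intros Hen. apply H. eauto. }
  destruct E as [e [He [Hea Hen]]]. unfold loc. apply sup_ub. split; auto.
  exists e. rewrite mul1. auto.
Qed.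

Arguments loc_top {L a n}.

Lemma loc_all (L : MultLattice) (a x : L) :
  C_lattice L -> h_local L -> a <> zero L ->
  (forall n, maximal n -> le x (loc a n)) -> le x a.
Proof.
  intros HC Hh Ha Hx. pose proof HC as [C1 [C2 C3]].
  rewrite (C3 x). apply sup_least. intros d [Hd Hdx].
  apply NNPP. intros Hda.
  destruct (@prime_avoid L (fun t => t = one L) (colon a d)) as [p [Pp [Pa Pt]]].
  - intros t ->. auto.
  - reflexivity.
  - intros s t -> ->. apply mul1.
  - intros t -> H. apply Hda. rewrite <- (mul1 L d).
    eapply le_trans. apply mul_mono2. exact H. apply le_refl. apply colon_mul.
  - assert (Hp0 : p <> zero L).
    { intros E. apply Ha. apply le_antisym; [|apply zero_le]. rewrite <- E.
      eapply le_trans; [|exact Pa]. apply colon_intro, mul_le_l. }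
    destruct (proj2 Hh p Pp Hp0) as [n [[Hn Hpn] _]].
    destruct (compact_loc HC (maximal_prime Hn) Hd (le_trans _ _ _ _ Hdx (Hx n Hn)))
      as [t [Ht [Htn Hdt]]].
    apply Htn. eapply le_trans; [|exact Hpn]. eapply le_trans; [|exact Pa].
    apply colon_intro. rewrite mulC. exact Hdt.
Qed.

Lemma list_s (L : MultLattice) (a m : L) (l : list L) :
  C_lattice L -> h_local L -> a <> zero L -> maximal m ->
  exists s, compact s /\ ~ le s m /\
    forall n, In n l -> maximal n -> n <> m -> le s (loc a n).
Proof.
  intros HC Hh Ha Hm. pose proof HC as [C1 [C2 C3]].
  induction l as [|n l IH].
  - exists (one L). split; auto. split. apply one_not_le, Hm. intros n [].
  - destruct IH as [s [Hs [Hsm Hsl]]].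
    destruct (classic (maximal n /\ n <> m)) as [[Hn Hnm] | Hno].
    + destruct (loc_other HC Hh Ha Hm Hn Hnm) as [u [Hu [Hum Hun]]].
      exists (mul s u). split; auto. split. apply prime_mul_not; auto. apply (maximal_prime Hm).
      intros z [<- | Hz] Hz1 Hz2.
      * eapply le_trans; [|exact Hun]. apply mul_le_r.
      * eapply le_trans; [|apply (Hsl z Hz Hz1 Hz2)]. apply mul_le_l.
    + exists s. split; auto. split; auto.
      intros z [<- | Hz] Hz1 Hz2; auto. exfalso; auto.
Qed.

Arguments list_s {L a m}.

Theorem proposition3p11 (L : MultLattice) :
  C_lattice L -> domain L -> h_local L -> principally_generated L ->
  forall a b m : L, a <> zero L -> b <> zero L -> maximal m ->
    loc (colon a b) m = colon (loc a m) (loc b m).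
Proof.
  intros HC Hd Hh Hpg a b m Ha Hb Hm.
  pose proof HC as [C1 [C2 C3]]. assert (Pm := maximal_prime Hm).
  apply le_antisym.
  - unfold loc at 1. apply sup_least. intros c [Hc [s [Hs [Hsm Hcs]]]].
    apply colon_intro. unfold loc. rewrite mul_sup. apply sup_least.
    intros t [d [[Hdc [u [Hu [Hum Hdu]]]] ->]].
    apply sup_ub. split; auto. exists (mul s u). split; auto. split.
    apply prime_mul_not; auto.
    rewrite mul4. eapply le_trans. apply mul_mono2. exact Hcs. exact Hdu. apply colon_mul.
  - rewrite (C3 (colon _ _)). apply sup_least. intros c [Hc Hcc].
    assert (Hcb : le (mul c b) (loc a m)).
    { eapply le_trans. apply mul_mono2. exact Hcc. apply le_loc. exact HC. apply Hm.
      apply colon_mul. }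
    destruct (proj1 Hh a Ha) as [l Hl].
    destruct (list_s l HC Hh Ha Hm) as [s [Hs [Hsm Hsl]]].
    assert (Hx : le (mul s (mul c b)) a).
    { apply loc_all; auto. intros n Hn.
      destruct (classic (n = m)) as [-> | Hnm].
      - eapply le_trans; [|exact Hcb]. apply mul_le_r.
      - destruct (classic (le a n)) as [Han | Han].
        + eapply le_trans; [|apply (Hsl n (Hl n Hn Han) Hn Hnm)]. apply mul_le_l.
        + eapply le_trans; [|apply (loc_top HC Han)]. apply le_one. }
    unfold loc. apply sup_ub. split; auto. exists s. split; auto. split; auto.
    apply colon_intro. rewrite (mulC _ c s), <- mulA. exact Hx.
Qed.
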